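(* With $S^\pm$ as defined in the context and $P_k$ the projectors of the Veronese sequence, for $0\le k\le 2s-1$ one has $\operatorname{tr}(S^+P_kS^-)\ne0$ and $P_{k+1}=\frac{S^+P_kS^-}{\operatorname{tr}(S^+P_kS^-)}$, and for $1\le k\le 2s$ one has $\operatorname{tr}(S^-P_kS^+)\neq 0$ and $P_{k-1}=\frac{S^-P_kS^+}{\operatorname{tr}(S^-P_kS^+)}$.
   Context: Let $2s\in\mathbb{Z}_{>0}$, $\xi_\pm=\xi^1\pm i\xi^2$ with $\xi_-=\overline{\xi_+}$, $\partial=\frac12(\partial_{\xi^1}-i\partial_{\xi^2})$. Matrix indices run over $0,\dots,2s$. Spin-$s$ matrices: $(\sigma^z)_{ij}=(s-i)\delta_{ij}$, $(\sigma^+)_{ij}=\sqrt{(2s-j+1)j}\,\delta_{i,j-1}$, $(\sigma^-)_{ij}=\sqrt{(2s-i+1)i}\,\delta_{i-1,j}$; $S^+=\frac{1}{1+\xi_+\xi_-}(2\xi_-\sigma^z-\sigma^-+\xi_-^2\sigma^+)$, $S^-=\frac{1}{1+\xi_+\xi_-}(2\xi_+\sigma^z+\xi_+^2\sigma^--\sigma^+)$. Veronese sequence: $(f_0)_j=\sqrt{\binom{2s}{j}}\xi_+^j$, $f_{k+1}=\big(\mathbf 1_{2s+1}-\frac{f_kf_k^\dagger}{f_k^\dagger f_k}\big)\partial f_k$; $P_k=\frac{f_kf_k^\dagger}{f_k^\dagger f_k}$. *)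

(* Defs.v *)
From Stdlib Require Import Reals ClassicalEpsilon.
Open Scope R_scope.

Record Cx := mkCx { re : R; im : R }.
Definition Cx0 : Cx := mkCx 0 0.
Definition Cx1 : Cx := mkCx 1 0.
Definition RtoCx (r : R) : Cx := mkCx r 0.
Definition Cxadd (a b : Cx) : Cx := mkCx (re a + re b) (im a + im b).
Definition Cxopp (a : Cx) : Cx := mkCx (- re a) (- im a).
Definition Cxsub (a b : Cx) : Cx := Cxadd a (Cxopp b).
Definition Cxmul (a b : Cx) : Cx :=
  mkCx (re a * re b - im a * im b) (re a * im b + im a * re b).
Definition Cxconj (a : Cx) : Cx := mkCx (re a) (- im a).
Definition Cxinv (a : Cx) : Cx :=
  let n := re a * re a + im a * im a in mkCx (re a / n) (- im a / n).
Definition Cxdiv (a b : Cx) : Cx := Cxmul a (Cxinv b).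
Fixpoint Cxpow (a : Cx) (n : nat) : Cx :=
  match n with O => Cx1 | S m => Cxmul a (Cxpow a m) end.

(* csum n f = f 0 + ... + f n  (n+1 terms) *)
Fixpoint csum (n : nat) (f : nat -> Cx) : Cx :=
  match n with O => f O | S m => Cxadd (csum m f) (f (S m)) end.

(* Vectors / matrices in C^{2s+1}; only indices 0..N (N = 2s) are meaningful. *)
Definition Vec := nat -> Cx.
Definition Mat := nat -> nat -> Cx.

Definition madd (A B : Mat) : Mat := fun i j => Cxadd (A i j) (B i j).
Definition msub (A B : Mat) : Mat := fun i j => Cxsub (A i j) (B i j).
Definition mscal (c : Cx) (A : Mat) : Mat := fun i j => Cxmul c (A i j).
Definition mmul (N : nat) (A B : Mat) : Mat :=
  fun i j => csum N (fun l => Cxmul (A i l) (B l j)).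
Definition mvec (N : nat) (A : Mat) (v : Vec) : Vec :=
  fun i => csum N (fun l => Cxmul (A i l) (v l)).
Definition mtr (N : nat) (A : Mat) : Cx := csum N (fun i => A i i).
Definition idm : Mat := fun i j => if Nat.eqb i j then Cx1 else Cx0.

Definition vnorm2 (N : nat) (v : Vec) : Cx := csum N (fun i => Cxmul (Cxconj (v i)) (v i)).
Definition proj (N : nat) (v : Vec) : Mat :=
  fun i j => Cxdiv (Cxmul (v i) (Cxconj (v j))) (vnorm2 N v).

(* spin-s matrices, N = 2s, s = N/2 *)
Definition sigma_z (N : nat) : Mat :=
  fun i j => if Nat.eqb i j then RtoCx (INR N / 2 - INR i) else Cx0.
Definition sigma_plus (N : nat) : Mat :=
  fun i j => if Nat.eqb (S i) j
             then RtoCx (sqrt ((INR N - INR j + 1) * INR j)) else Cx0.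
Definition sigma_minus (N : nat) : Mat :=
  fun i j => if Nat.eqb i (S j)
             then RtoCx (sqrt ((INR N - INR i + 1) * INR i)) else Cx0.

(* xi^1 = x, xi^2 = y *)
Definition xip (x y : R) : Cx := mkCx x y.
Definition xim (x y : R) : Cx := mkCx x (- y).

Definition S_plus (N : nat) (x y : R) : Mat :=
  mscal (Cxinv (Cxadd Cx1 (Cxmul (xip x y) (xim x y))))
    (madd (msub (mscal (Cxmul (RtoCx 2) (xim x y)) (sigma_z N)) (sigma_minus N))
          (mscal (Cxpow (xim x y) 2) (sigma_plus N))).
Definition S_minus (N : nat) (x y : R) : Mat :=
  mscal (Cxinv (Cxadd Cx1 (Cxmul (xip x y) (xim x y))))
    (msub (madd (mscal (Cxmul (RtoCx 2) (xip x y)) (sigma_z N))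
                (mscal (Cxpow (xip x y) 2) (sigma_minus N)))
          (sigma_plus N)).

(* Partial derivatives of a real function of (xi^1, xi^2): the (unique, when it
   exists) limit, chosen by epsilon. *)
Definition pd1 (g : R -> R -> R) (x y : R) : R :=
  epsilon (inhabits 0) (fun l => derivable_pt_lim (fun t => g t y) x l).
Definition pd2 (g : R -> R -> R) (x y : R) : R :=
  epsilon (inhabits 0) (fun l => derivable_pt_lim (fun t => g x t) y l).

(* Vector-valued functions of (xi^1, xi^2) and the Wirtinger derivative
   partial = 1/2 (d/dxi^1 - i d/dxi^2), applied componentwise. *)
Definition VF := R -> R -> Vec.
Definition wirt (F : VF) : VF :=
  fun x y j =>
    let u := fun a b => re (F a b j) in
    let v := fun a b => im (F a b j) in
    mkCx ((pd1 u x y + pd2 v x y) / 2) ((pd1 v x y - pd2 u x y) / 2).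

Definition f0 (N : nat) : VF :=
  fun x y j => Cxmul (RtoCx (sqrt (Binomial.C N j))) (Cxpow (xip x y) j).
Fixpoint fseq (N k : nat) : VF :=
  match k with
  | O => f0 N
  | S m => fun x y => mvec N (msub idm (proj N (fseq N m x y))) (wirt (fseq N m) x y)
  end.
Definition Pk (N k : nat) (x y : R) : Mat := proj N (fseq N k x y).

(* Main.v *)
Require Import Defs.
From Stdlib Require Import Reals Lra Lia Psatz FunctionalExtensionality Ring.
From Coquelicot Require Import Coquelicot.
From Stdlib Require Import ClassicalEpsilon Classical.
Open Scope R_scope.

Lemma Cx_ext (a b : Cx) : re a = re b -> im a = im b -> a = b.
Proof. destruct a, b; simpl; intros; subst; reflexivity. Qed.

Ltac cxu := unfold Cxsub, Cxadd, Cxopp, Cxmul, Cxconj, Cxdiv, Cxinv, RtoCx, Cx0, Cx1, xip, xim in *.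
Ltac cx := cxu; apply Cx_ext; simpl; field.
Ltac cxr := cxu; apply Cx_ext; simpl; ring.

Lemma Cx_ring : ring_theory Cx0 Cx1 Cxadd Cxmul Cxsub Cxopp (@eq Cx).
Proof. constructor; intros; cxr. Qed.
Add Ring CxRing : Cx_ring.

Declare Scope cx_scope. Delimit Scope cx_scope with C.
Infix "+" := Cxadd : cx_scope.
Infix "-" := Cxsub : cx_scope.
Infix "*" := Cxmul : cx_scope.
Notation "- a" := (Cxopp a) : cx_scope.

Definition ci (i : nat) : Cx := RtoCx (INR i).
Lemma ci_S i : ci (S i) = (ci i + Cx1)%C.
Proof. unfold ci; rewrite S_INR; cxr. Qed.
Lemma ci0 : ci 0 = Cx0.
Proof. unfold ci; simpl; cxr. Qed.
Definition two := (Cx1 + Cx1)%C.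

Definition dn (p : Vec) (i : nat) : Cx := match i with O => Cx0 | S j => p j end.
Definition Dm (N : nat) (p : Vec) : Vec := fun i => ((ci N - ci i + Cx1) * dn p i)%C.
Definition Dp (p : Vec) : Vec := fun i => ((ci i + Cx1) * p (S i))%C.
Definition Dz (N : nat) (p : Vec) : Vec := fun i => ((ci N - two * ci i) * p i)%C.
Definition Xp N x y (p : Vec) : Vec := fun i =>
  (Dm N p i - xim x y * Dz N p i - xim x y * xim x y * Dp p i)%C.
Definition Yp N x y (p : Vec) : Vec := fun i =>
  (xip x y * xip x y * Dm N p i + xip x y * Dz N p i - Dp p i)%C.
Definition Zp N x y (p : Vec) : Vec := fun i =>
  (- two * xip x y * Dm N p i - (Cx1 - xip x y * xim x y) * Dz N p i
   - two * xim x y * Dp p i)%C.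
Definition rhoC x y := (Cx1 + xip x y * xim x y)%C.

Lemma comm_ZX N x y p i :
  (Zp N x y (Xp N x y p) i - Xp N x y (Zp N x y p) i =
  two * rhoC x y * Xp N x y p i)%C.
Proof.
  destruct i as [|[|i]]; unfold Zp, Xp, Dm, Dp, Dz, rhoC, two; simpl dn; rewrite ?ci_S, ?ci0; ring.
Qed.

Lemma comm_YX N x y p i :
  (Yp N x y (Xp N x y p) i - Xp N x y (Yp N x y p) i =
  rhoC x y * Zp N x y p i)%C.
Proof.
  destruct i as [|[|i]]; unfold Yp, Zp, Xp, Dm, Dp, Dz, rhoC, two; simpl dn; rewrite ?ci_S, ?ci0; ring.
Qed.

Definition bin (N i : nat) : R := if (i <=? N)%nat then Binomial.C N i else 0.
Definition B N i : Cx := RtoCx (bin N i).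

Lemma bin_rel N i : (INR N - INR i) * bin N i = (INR i + 1) * bin N (S i).
Proof.
  unfold bin. destruct (Nat.leb_spec i N), (Nat.leb_spec (S i) N); try lia.
  - rewrite Binomial.pascal_step3 by lia. rewrite minus_INR by lia. rewrite S_INR. field.
    pose proof (pos_INR i); lra.
  - assert (i = N) by lia. subst. ring.
  - ring.
Qed.

Lemma B_rel N i : ((ci N - ci i) * B N i = (ci i + Cx1) * B N (S i))%C.
Proof. unfold ci, B. pose proof (bin_rel N i). cxu. apply Cx_ext; simpl; try ring. lra. Qed.

Lemma bin_pos N i : (i <= N)%nat -> 0 < bin N i.
Proof.
  intro H. unfold bin. destruct (Nat.leb_spec i N); try lia. unfold Binomial.C.
  apply Rdiv_lt_0_compat. apply lt_0_INR, Factorial.lt_O_fact.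
  apply Rmult_lt_0_compat; apply lt_0_INR, Factorial.lt_O_fact.
Qed.

Lemma bin_out N i : (N < i)%nat -> bin N i = 0.
Proof. intro H. unfold bin. destruct (Nat.leb_spec i N); try lia. reflexivity. Qed.

Lemma cx_lin2 (a b c d u v s t : Cx) : u = v -> s = t ->
  (a - b = c * (u - v) + d * (s - t))%C -> a = b.
Proof. intros -> -> H. assert (E: (a - b = Cx0)%C) by (rewrite H; ring).
  assert (E2 : a = (a - b + b)%C) by ring. rewrite E2, E. ring. Qed.

Definition q0 N x y : Vec := fun i => (B N i * Cxpow (xip x y) i)%C.

Lemma Yq0 N x y i : Yp N x y (q0 N x y) i = Cx0.
Proof.
  unfold Yp, Dm, Dz, Dp, q0. destruct i as [|j]; simpl dn; simpl Cxpow.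
  - pose proof (B_rel N 0) as H. rewrite ci0 in *.
    eapply cx_lin2 with (c := xip x y) (d := Cx0) (s := Cx0) (t := Cx0); [exact H| reflexivity | ring].
  - pose proof (B_rel N j) as H1. pose proof (B_rel N (S j)) as H2. rewrite ci_S in *.
    eapply cx_lin2 with (c := (xip x y * xip x y * Cxpow (xip x y) j)%C)
        (d := (xip x y * xip x y * Cxpow (xip x y) j)%C);
      [exact H1 | exact H2 | unfold two; ring].
Qed.

Lemma Zq0 N x y i : Zp N x y (q0 N x y) i = (- ci N * rhoC x y * q0 N x y i)%C.
Proof.
  unfold Zp, Dm, Dz, Dp, q0, rhoC. destruct i as [|j]; simpl dn; simpl Cxpow.
  - pose proof (B_rel N 0) as H. rewrite ci0 in *.
    eapply cx_lin2 with (c := (two * xim x y * xip x y)%C) (d := Cx0) (s := Cx0) (t := Cx0);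
      [exact H| reflexivity | unfold two; ring].
  - pose proof (B_rel N j) as H1. pose proof (B_rel N (S j)) as H2. rewrite ci_S in *.
    eapply cx_lin2 with (c := (- two * xip x y * Cxpow (xip x y) j)%C)
        (d := (two * xim x y * xip x y * xip x y * Cxpow (xip x y) j)%C);
      [exact H1 | exact H2 | unfold two; ring].
Qed.

Lemma Xp_ext N x y p p' : (forall i, p i = p' i) -> forall j, Xp N x y p j = Xp N x y p' j.
Proof. intros H j. unfold Xp, Dm, Dz, Dp, dn. destruct j; rewrite ?H; reflexivity. Qed.
Lemma Yp_ext N x y p p' : (forall i, p i = p' i) -> forall j, Yp N x y p j = Yp N x y p' j.
Proof. intros H j. unfold Yp, Dm, Dz, Dp, dn. destruct j; rewrite ?H; reflexivity. Qed.

Lemma Xp_lin N x y p p' c d j :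
  Xp N x y (fun i => c * p i + d * p' i)%C j = (c * Xp N x y p j + d * Xp N x y p' j)%C.
Proof. unfold Xp, Dm, Dz, Dp, dn. destruct j; ring. Qed.
Lemma Yp_lin N x y p p' c d j :
  Yp N x y (fun i => c * p i + d * p' i)%C j = (c * Yp N x y p j + d * Yp N x y p' j)%C.
Proof. unfold Yp, Dm, Dz, Dp, dn. destruct j; ring. Qed.
Lemma Xp_scal N x y p c j :
  Xp N x y (fun i => c * p i)%C j = (c * Xp N x y p j)%C.
Proof. unfold Xp, Dm, Dz, Dp, dn. destruct j; ring. Qed.
Lemma Yp_scal N x y p c j :
  Yp N x y (fun i => c * p i)%C j = (c * Yp N x y p j)%C.
Proof. unfold Yp, Dm, Dz, Dp, dn. destruct j; ring. Qed.

Fixpoint qk N x y (k : nat) : Vec :=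
  match k with O => q0 N x y | S m => Xp N x y (qk N x y m) end.

Lemma q0_supp N x y i : (N < i)%nat -> q0 N x y i = Cx0.
Proof. intro H. unfold q0, B. rewrite bin_out by exact H. cxr. Qed.

Lemma ciN1 N : (ci N - ci (S N) + Cx1)%C = Cx0.
Proof. rewrite ci_S. ring. Qed.

Lemma Xp_supp N x y p : (forall i, (N < i)%nat -> p i = Cx0) ->
  forall i, (N < i)%nat -> Xp N x y p i = Cx0.
Proof.
  intros H i Hi. unfold Xp, Dm, Dz, Dp. destruct i as [|j]; [lia|]. simpl dn.
  rewrite (H (S j)), (H (S (S j))) by lia.
  destruct (Nat.eq_dec j N) as [->|Hj].
  - rewrite ciN1. ring.
  - rewrite (H j) by lia. ring.
Qed.

Lemma qk_supp N x y k i : (N < i)%nat -> qk N x y k i = Cx0.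
Proof.
  revert i; induction k; intros i Hi; simpl.
  - apply q0_supp; exact Hi.
  - apply Xp_supp; assumption.
Qed.

Lemma Zqk N x y k i :
  Zp N x y (qk N x y k) i = ((two * ci k - ci N) * rhoC x y * qk N x y k i)%C.
Proof.
  revert i; induction k; intro i.
  - simpl. rewrite Zq0, ci0. ring.
  - simpl qk. pose proof (comm_ZX N x y (qk N x y k) i) as E.
    assert (E2 : Zp N x y (Xp N x y (qk N x y k)) i =
      (Xp N x y (Zp N x y (qk N x y k)) i + two * rhoC x y * Xp N x y (qk N x y k) i)%C).
    { rewrite <- E. ring. }
    rewrite E2. rewrite (Xp_ext N x y _ _ IHk). rewrite Xp_scal. rewrite ci_S. unfold two. ring.
Qed.

Definition cY (N k : nat) : Cx := (- (ci k + Cx1) * (ci N - ci k))%C.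

Lemma Yqk N x y k i :
  Yp N x y (qk N x y (S k)) i = (cY N k * rhoC x y * rhoC x y * qk N x y k i)%C.
Proof.
  revert i; induction k; intro i.
  - simpl. pose proof (comm_YX N x y (q0 N x y) i) as E.
    assert (E2 : Yp N x y (Xp N x y (q0 N x y)) i =
      (Xp N x y (Yp N x y (q0 N x y)) i + rhoC x y * Zp N x y (q0 N x y) i)%C).
    { rewrite <- E. ring. }
    rewrite E2, Zq0. rewrite (Xp_ext N x y _ (fun i => (Cx0 * q0 N x y i)%C)).
    + rewrite Xp_scal. unfold cY. rewrite ci0. ring.
    + intro. rewrite Yq0. ring.
  - change (qk N x y (S (S k))) with (Xp N x y (qk N x y (S k))).
    pose proof (comm_YX N x y (qk N x y (S k)) i) as E.
    assert (E2 : Yp N x y (Xp N x y (qk N x y (S k))) i =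
      (Xp N x y (Yp N x y (qk N x y (S k))) i + rhoC x y * Zp N x y (qk N x y (S k)) i)%C).
    { rewrite <- E. ring. }
    rewrite E2, Zqk. rewrite (Xp_ext N x y _ _ IHk). rewrite Xp_scal.
    simpl qk. unfold cY. rewrite !ci_S. unfold two. ring.
Qed.

Lemma csum_ext n f g : (forall i, (i <= n)%nat -> f i = g i) -> csum n f = csum n g.
Proof.
  induction n; intro H; simpl. apply H; lia.
  rewrite IHn by (intros; apply H; lia). rewrite H by lia. reflexivity.
Qed.
Lemma csum_lin3 n f g h a b c :
  csum n (fun i => a * f i + b * g i + c * h i)%C =
  (a * csum n f + b * csum n g + c * csum n h)%C.
Proof. induction n; simpl. reflexivity. rewrite IHn. ring. Qed.
Lemma csum_scal n f a : csum n (fun i => a * f i)%C = (a * csum n f)%C.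
Proof. induction n; simpl. reflexivity. rewrite IHn. ring. Qed.
Lemma csum_opp n f : (- csum n f)%C = csum n (fun i => - f i)%C.
Proof. induction n; simpl. reflexivity. rewrite <- IHn. ring. Qed.
Lemma csum_shift n f : csum (S n) f = (f O + csum n (fun i => f (S i)))%C.
Proof.
  induction n. simpl. reflexivity.
  change (csum (S (S n)) f) with (csum (S n) f + f (S (S n)))%C. rewrite IHn. simpl. ring.
Qed.
Lemma csum_S n f : csum (S n) f = (csum n f + f (S n))%C.
Proof. reflexivity. Qed.
Lemma csum_zero n f : (forall i, (i <= n)%nat -> f i = Cx0) -> csum n f = Cx0.
Proof. induction n; intro H; simpl. apply H; lia. rewrite IHn, H by (intros; try apply H; lia). ring. Qed.

Definition wt N i : Cx := RtoCx (/ bin N i).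
Definition ipw N (p q : Vec) : Cx := csum N (fun i => Cxconj (p i) * wt N i * q i)%C.

Lemma wt_rel N i : (i < N)%nat ->
  (wt N (S i) * (ci N - ci i) = (ci i + Cx1) * wt N i)%C.
Proof.
  intro H. pose proof (bin_rel N i) as E. pose proof (bin_pos N i) as P0.
  pose proof (bin_pos N (S i)) as P1.
  assert (0 < bin N i) by (apply P0; lia). assert (0 < bin N (S i)) by (apply P1; lia).
  unfold wt, ci. cxu. apply Cx_ext; simpl. 2: ring.
  transitivity ((INR N - INR i) * bin N i / (bin N i * bin N (S i))).
  field; lra. rewrite E. field. lra.
Qed.

Lemma conj_mul a b : Cxconj (a * b)%C = (Cxconj a * Cxconj b)%C.
Proof. cxr. Qed.
Lemma conj_ci n : Cxconj (ci n) = ci n.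
Proof. unfold ci. cxr. Qed.
Lemma conj_add a b : Cxconj (a + b)%C = (Cxconj a + Cxconj b)%C.
Proof. cxr. Qed.
Lemma conj_sub a b : Cxconj (a - b)%C = (Cxconj a - Cxconj b)%C.
Proof. cxr. Qed.
Lemma conj_1 : Cxconj Cx1 = Cx1. Proof. cxr. Qed.
Lemma conj_0 : Cxconj Cx0 = Cx0. Proof. cxr. Qed.

Lemma adj_Dm N p q : p (S N) = Cx0 -> ipw N p (Dm N q) = ipw N (Dp p) q.
Proof.
  intro Hp. unfold ipw, Dm, Dp. destruct N as [|n].
  - simpl. rewrite Hp. cxr.
  - rewrite csum_shift. simpl (csum (S n) _). simpl dn. rewrite Hp.
    rewrite (csum_ext n _ (fun i => (Cxconj ((ci i + Cx1) * p (S i)) * wt (S n) i * q i)%C)).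
    + rewrite conj_mul, conj_0. ring.
    + intros i Hi. pose proof (wt_rel (S n) i ltac:(lia)) as W.
      rewrite conj_mul, conj_add, conj_ci, conj_1. rewrite (ci_S i).
      transitivity (Cxconj (p (S i)) * (wt (S n) (S i) * (ci (S n) - ci i)) * q i)%C.
      * ring.
      * rewrite W. ring.
Qed.

Lemma adj_Dp N p q : q (S N) = Cx0 -> ipw N p (Dp q) = ipw N (Dm N p) q.
Proof.
  intro Hq. unfold ipw, Dm, Dp. destruct N as [|n].
  - simpl. rewrite Hq. cxr.
  - symmetry. rewrite csum_shift. rewrite csum_S. simpl dn.
    rewrite Hq.
    rewrite (csum_ext n _ (fun i => (Cxconj (p i) * wt (S n) i * ((ci i + Cx1) * q (S i)))%C)).
    + rewrite conj_mul, conj_0. ring.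
    + intros i Hi. pose proof (wt_rel (S n) i ltac:(lia)) as W.
      rewrite conj_mul, conj_add, conj_sub, !conj_ci, conj_1. rewrite (ci_S i).
      transitivity (Cxconj (p i) * (wt (S n) (S i) * (ci (S n) - ci i)) * q (S i))%C.
      * ring.
      * rewrite W. ring.
Qed.

Lemma adj_Dz N p q : ipw N p (Dz N q) = ipw N (Dz N p) q.
Proof.
  unfold ipw, Dz. apply csum_ext. intros i _.
  rewrite conj_mul, conj_sub, conj_mul, !conj_ci. unfold two. rewrite conj_add, conj_1. ring.
Qed.




Lemma adj_X N x y p q : p (S N) = Cx0 -> q (S N) = Cx0 ->
  ipw N p (Xp N x y q) = (- ipw N (Yp N x y p) q)%C.
Proof.
  intros Hp Hq.
  transitivity (Cx1 * ipw N p (Dm N q) + (- xim x y) * ipw N p (Dz N q)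
      + (- (xim x y * xim x y)) * ipw N p (Dp q))%C.
  - unfold ipw. rewrite <- csum_lin3. apply csum_ext. intros i _. unfold Xp. ring.
  - rewrite adj_Dm, adj_Dz, adj_Dp by assumption.
    unfold ipw. rewrite <- csum_lin3, csum_opp. apply csum_ext. intros i _.
    unfold Yp. rewrite !conj_sub, conj_add, !conj_mul.
    assert (Cxconj (xip x y) = xim x y) as -> by cxr. ring.
Qed.

Lemma ipw_scal_l N p q c : ipw N (fun i => c * p i)%C q = (Cxconj c * ipw N p q)%C.
Proof. unfold ipw. rewrite <- csum_scal. apply csum_ext. intros. rewrite conj_mul. ring. Qed.

Lemma ipw_ext_l N p p' q : (forall i, p i = p' i) -> ipw N p q = ipw N p' q.
Proof. intro H. unfold ipw. apply csum_ext. intros. rewrite H. reflexivity. Qed.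

Lemma orth N x y k : ipw N (qk N x y k) (qk N x y (S k)) = Cx0.
Proof.
  induction k.
  - simpl. rewrite adj_X by (apply q0_supp; lia).
    rewrite (ipw_ext_l N _ (fun i => Cx0 * q0 N x y i)%C).
    + rewrite ipw_scal_l. rewrite conj_0. ring.
    + intro i. rewrite Yq0. ring.
  - change (qk N x y (S (S k))) with (Xp N x y (qk N x y (S k))).
    rewrite adj_X by (apply qk_supp; lia).
    rewrite (ipw_ext_l N _ (fun i => (cY N k * rhoC x y * rhoC x y) * qk N x y k i)%C).
    + rewrite ipw_scal_l. rewrite IHk. ring.
    + intro i. apply Yqk.
Qed.

Lemma dpl_ext f g x l l' : (forall t, f t = g t) -> l = l' ->
  derivable_pt_lim f x l -> derivable_pt_lim g x l'.
Proof.
  intros H <- D. replace g with f. exact D. apply functional_extensionality. exact H.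
Qed.
Lemma dpl_plus f g x a b : derivable_pt_lim f x a -> derivable_pt_lim g x b ->
  derivable_pt_lim (fun t => f t + g t) x (a + b).
Proof. intros. exact (derivable_pt_lim_plus f g x a b H H0). Qed.
Lemma dpl_minus f g x a b : derivable_pt_lim f x a -> derivable_pt_lim g x b ->
  derivable_pt_lim (fun t => f t - g t) x (a - b).
Proof. intros. exact (derivable_pt_lim_minus f g x a b H H0). Qed.
Lemma dpl_mult f g x a b : derivable_pt_lim f x a -> derivable_pt_lim g x b ->
  derivable_pt_lim (fun t => f t * g t) x (a * g x + f x * b).
Proof. intros. exact (derivable_pt_lim_mult f g x a b H H0). Qed.
Lemma dpl_const c x : derivable_pt_lim (fun _ => c) x 0.
Proof. exact (derivable_pt_lim_const c x). Qed.
Lemma dpl_id x : derivable_pt_lim (fun t => t) x 1.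
Proof. exact (derivable_pt_lim_id x). Qed.

Definition Dif (F Fx Fy : R -> R -> Cx) := forall x y,
  derivable_pt_lim (fun t => re (F t y)) x (re (Fx x y)) /\
  derivable_pt_lim (fun t => im (F t y)) x (im (Fx x y)) /\
  derivable_pt_lim (fun t => re (F x t)) y (re (Fy x y)) /\
  derivable_pt_lim (fun t => im (F x t)) y (im (Fy x y)).

Definition wd (Fx Fy : R -> R -> Cx) x y : Cx :=
  (mkCx (/2) 0 * (Fx x y - mkCx 0 1 * Fy x y))%C.
Definition HasW (F D : R -> R -> Cx) :=
  exists Fx Fy, Dif F Fx Fy /\ forall x y, D x y = wd Fx Fy x y.

Lemma Dif_add F Fx Fy G Gx Gy : Dif F Fx Fy -> Dif G Gx Gy ->
  Dif (fun x y => F x y + G x y)%C (fun x y => Fx x y + Gx x y)%C (fun x y => Fy x y + Gy x y)%C.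
Proof.
  intros HF HG x y. destruct (HF x y) as (A1&A2&A3&A4). destruct (HG x y) as (B1&B2&B3&B4).
  simpl. repeat split; apply dpl_plus; assumption.
Qed.

Lemma Dif_mul F Fx Fy G Gx Gy : Dif F Fx Fy -> Dif G Gx Gy ->
  Dif (fun x y => F x y * G x y)%C (fun x y => Fx x y * G x y + F x y * Gx x y)%C
      (fun x y => Fy x y * G x y + F x y * Gy x y)%C.
Proof.
  intros HF HG x y. destruct (HF x y) as (A1&A2&A3&A4). destruct (HG x y) as (B1&B2&B3&B4).
  simpl. repeat split.
  - eapply dpl_ext; [intro; reflexivity| |apply dpl_minus; apply dpl_mult; eassumption]. simpl; ring.
  - eapply dpl_ext; [intro; reflexivity| |apply dpl_plus; apply dpl_mult; eassumption]. simpl; ring.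
  - eapply dpl_ext; [intro; reflexivity| |apply dpl_minus; apply dpl_mult; eassumption]. simpl; ring.
  - eapply dpl_ext; [intro; reflexivity| |apply dpl_plus; apply dpl_mult; eassumption]. simpl; ring.
Qed.

Lemma Dif_const c : Dif (fun _ _ => c) (fun _ _ => Cx0) (fun _ _ => Cx0).
Proof. intros x y. simpl. repeat split; apply dpl_const. Qed.

Lemma Dif_z : Dif xip (fun _ _ => Cx1) (fun _ _ => mkCx 0 1).
Proof. intros x y. unfold xip. simpl. repeat split; try apply dpl_id; apply dpl_const. Qed.

Lemma Dif_zb : Dif xim (fun _ _ => Cx1) (fun _ _ => mkCx 0 (-1)).
Proof.
  intros x y. unfold xim. simpl. repeat split; try apply dpl_id; try apply dpl_const.
  apply (dpl_ext (fun t => 0 - t) _ y (0 - 1)); [intro; ring | ring | apply dpl_minus; [apply dpl_const|apply dpl_id]].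
Qed.

Definition rho (x y : R) := 1 + (x*x + y*y).
Definition rinv (x y : R) : Cx := RtoCx (/ rho x y).

Lemma rho_pos x y : 0 < rho x y.
Proof. unfold rho. nra. Qed.

Lemma Dif_rinv : Dif rinv (fun x y => RtoCx (- 2 * x / (rho x y * rho x y)))
                           (fun x y => RtoCx (- 2 * y / (rho x y * rho x y))).
Proof.
  intros x y. unfold rinv, RtoCx. simpl. pose proof (rho_pos x y) as P. unfold rho in *.
  repeat split; try apply dpl_const.
  - apply is_derive_Reals. auto_derive. nra. field. nra.
  - apply is_derive_Reals. auto_derive. nra. field. nra.
Qed.

Lemma HasW_add F DF G DG : HasW F DF -> HasW G DG ->
  HasW (fun x y => F x y + G x y)%C (fun x y => DF x y + DG x y)%C.
Proof.
  intros (Fx&Fy&HF&EF) (Gx&Gy&HG&EG). eexists; eexists; split.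
  apply Dif_add; eassumption. intros x y. rewrite EF, EG. unfold wd. ring.
Qed.
Lemma HasW_mul F DF G DG : HasW F DF -> HasW G DG ->
  HasW (fun x y => F x y * G x y)%C (fun x y => DF x y * G x y + F x y * DG x y)%C.
Proof.
  intros (Fx&Fy&HF&EF) (Gx&Gy&HG&EG). eexists; eexists; split.
  apply Dif_mul; eassumption. intros x y. rewrite EF, EG. unfold wd. ring.
Qed.
Lemma HasW_const c : HasW (fun _ _ => c) (fun _ _ => Cx0).
Proof. eexists; eexists; split. apply Dif_const. intros. unfold wd. cxr. Qed.
Lemma HasW_z : HasW xip (fun _ _ => Cx1).
Proof. eexists; eexists; split. apply Dif_z. intros. unfold wd. cx. Qed.
Lemma HasW_zb : HasW xim (fun _ _ => Cx0).
Proof. eexists; eexists; split. apply Dif_zb. intros. unfold wd. cx. Qed.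
Lemma HasW_rinv : HasW rinv (fun x y => - xim x y * rinv x y * rinv x y)%C.
Proof.
  eexists; eexists; split. apply Dif_rinv. intros. unfold wd, rinv.
  pose proof (rho_pos x y). cx; lra.
Qed.
Lemma HasW_ext F D D' : HasW F D -> (forall x y, D x y = D' x y) -> HasW F D'.
Proof. intros (Fx&Fy&HF&EF) E. exists Fx, Fy. split; auto. intros; rewrite <- E; auto. Qed.
Lemma HasW_extF F F' D : (forall x y, F x y = F' x y) -> HasW F D -> HasW F' D.
Proof.
  intros E H. replace F' with F. exact H.
  apply functional_extensionality; intro; apply functional_extensionality; intro; apply E.
Qed.

Lemma pd1_eq g x y l : derivable_pt_lim (fun t => g t y) x l -> pd1 g x y = l.
Proof.
  intro H. unfold pd1. pose proof (epsilon_spec (inhabits 0)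
     (fun l => derivable_pt_lim (fun t => g t y) x l) (ex_intro _ l H)) as E. simpl in E.
  eapply uniqueness_limite; eassumption.
Qed.

Lemma pd2_eq g x y l : derivable_pt_lim (fun t => g x t) y l -> pd2 g x y = l.
Proof.
  intro H. unfold pd2. pose proof (epsilon_spec (inhabits 0)
     (fun l => derivable_pt_lim (fun t => g x t) y l) (ex_intro _ l H)) as E. simpl in E.
  eapply uniqueness_limite; eassumption.
Qed.

Lemma wirt_HasW (V : VF) j D : HasW (fun x y => V x y j) D -> forall x y, wirt V x y j = D x y.
Proof.
  intros (Fx&Fy&HF&EF) x y. rewrite EF. destruct (HF x y) as (A1&A2&A3&A4).
  unfold wirt. rewrite (pd1_eq _ _ _ _ A1), (pd1_eq _ _ _ _ A2), (pd2_eq _ _ _ _ A3), (pd2_eq _ _ _ _ A4).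
  unfold wd. cx.
Qed.

Lemma HasW_sub F DF G DG : HasW F DF -> HasW G DG ->
  HasW (fun x y => F x y - G x y)%C (fun x y => DF x y - DG x y)%C.
Proof.
  intros HF HG.
  apply (HasW_extF (fun x y => F x y + (- Cx1) * G x y)%C); [intros; ring|].
  eapply HasW_ext. apply HasW_add. exact HF. apply HasW_mul. apply HasW_const. exact HG.
  intros; simpl; ring.
Qed.
Lemma HasW_cmul c F DF : HasW F DF -> HasW (fun x y => c * F x y)%C (fun x y => c * DF x y)%C.
Proof.
  intros HF. eapply HasW_ext. apply HasW_mul. apply HasW_const. exact HF. intros; simpl; ring.
Qed.

Lemma HasW_zpow m : HasW (fun x y => Cxpow (xip x y) (S m)) (fun x y => ci (S m) * Cxpow (xip x y) m)%C.
Proof.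
  induction m.
  - simpl. eapply HasW_ext. apply HasW_mul. apply HasW_z. apply HasW_const.
    intros; simpl. rewrite ci_S, ci0. ring.
  - change (fun x y => Cxpow (xip x y) (S (S m))) with (fun x y => xip x y * Cxpow (xip x y) (S m))%C.
    eapply HasW_ext. apply HasW_mul. apply HasW_z. exact IHm.
    intros; simpl. rewrite (ci_S (S m)). ring.
Qed.

Definition Dq N (k i : nat) x y : Cx :=
  (rinv x y * rinv x y * qk N x y (S k) i + ci N * xim x y * rinv x y * qk N x y k i)%C.

Lemma rinv_rho x y : (rinv x y * rhoC x y = Cx1)%C.
Proof. unfold rinv, rhoC. pose proof (rho_pos x y). unfold rho in *. cxu; apply Cx_ext; simpl; field; lra. Qed.

Lemma base_id N x y i : (rhoC x y * rhoC x y * (B N i * match i with O => Cx0 | S m => ci (S m) * Cxpow (xip x y) m end)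
   = Xp N x y (q0 N x y) i + ci N * xim x y * rhoC x y * q0 N x y i)%C.
Proof.
  unfold Xp, Dm, Dz, Dp, q0, rhoC. destruct i as [|j]; simpl dn; simpl Cxpow.
  - pose proof (B_rel N 0) as H. rewrite ci0 in *.
    eapply cx_lin2 with (c := (- xim x y * xim x y * xip x y)%C) (d := Cx0) (s := Cx0) (t := Cx0);
      [exact H| reflexivity | unfold two; ring].
  - pose proof (B_rel N j) as H1. pose proof (B_rel N (S j)) as H2. rewrite ?ci_S in *.
    eapply cx_lin2 with (c := (- Cxpow (xip x y) j)%C)
        (d := (- xim x y * xim x y * xip x y * xip x y * Cxpow (xip x y) j)%C);
      [exact H1 | exact H2 | unfold two; ring].
Qed.

Lemma lem_div x y a X Q c : (rhoC x y * rhoC x y * a = X + c * rhoC x y * Q)%C ->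
  a = (rinv x y * rinv x y * X + c * rinv x y * Q)%C.
Proof.
  intro E. pose proof (rinv_rho x y) as R.
  transitivity (rinv x y * rinv x y * (rhoC x y * rhoC x y * a))%C.
  - transitivity ((rinv x y * rhoC x y) * (rinv x y * rhoC x y) * a)%C. rewrite R; ring. ring.
  - rewrite E. transitivity (rinv x y * rinv x y * X + c * (rinv x y * rhoC x y) * rinv x y * Q)%C.
    ring. rewrite R. ring.
Qed.

Lemma HasW_q0 N i : HasW (fun x y => q0 N x y i) (Dq N 0 i).
Proof.
  unfold q0. destruct i as [|m].
  - simpl Cxpow. eapply HasW_ext. apply HasW_const. intros x y. unfold Dq. simpl qk.
    pose proof (base_id N x y 0) as E. apply lem_div in E. rewrite <- E. unfold q0. ring.
  - eapply HasW_ext. apply HasW_cmul. apply HasW_zpow. intros x y. unfold Dq. simpl qk.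
    pose proof (base_id N x y (S m)) as E. apply lem_div in E. exact E.
Qed.

Lemma HasW_X N (P DP : R -> R -> Vec) :
  (forall i, HasW (fun x y => P x y i) (fun x y => DP x y i)) ->
  forall i, HasW (fun x y => Xp N x y (P x y) i) (fun x y => Xp N x y (DP x y) i).
Proof.
  intros H i. unfold Xp, Dm, Dz, Dp. destruct i; simpl dn;
  (eapply HasW_ext; [ apply HasW_sub; [apply HasW_sub|];
    [ apply HasW_cmul; first [apply HasW_const | apply H]
    | apply HasW_mul; [apply HasW_zb | apply HasW_cmul; apply H]
    | apply HasW_mul; [apply HasW_mul; apply HasW_zb | apply HasW_cmul; apply H]]
   | intros x y; cbv beta; ring]).
Qed.

Lemma HasW_qk N k i : HasW (fun x y => qk N x y k i) (Dq N k i).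
Proof.
  revert i. induction k; intro i.
  - apply HasW_q0.
  - simpl qk. eapply HasW_ext. apply (HasW_X N (fun x y => qk N x y k) (fun x y j => Dq N k j x y)).
    exact IHk. intros x y. cbv beta.
    rewrite (Xp_ext N x y (fun j => Dq N k j x y) (fun j => (rinv x y * rinv x y) * qk N x y (S k) j +
        (ci N * xim x y * rinv x y) * qk N x y k j)%C).
    + rewrite Xp_lin. unfold Dq. simpl qk. ring.
    + intros; unfold Dq; ring.
Qed.

Fixpoint ek (k : nat) (x y : R) : Cx :=
  match k with O => Cx1 | S m => (rinv x y * rinv x y * ek m x y)%C end.

Lemma HasW_ek k : HasW (ek k) (fun x y => - two * ci k * xim x y * rinv x y * ek k x y)%C.
Proof.
  induction k.
  - simpl. eapply HasW_ext. apply HasW_const. intros; rewrite ci0; ring.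
  - simpl. eapply HasW_ext. apply HasW_mul. apply HasW_mul; apply HasW_rinv. exact IHk.
    intros x y. simpl. rewrite ci_S. unfold two. ring.
Qed.

Definition sC N i : Cx := RtoCx (/ sqrt (bin N i)).
Definition Fk N k : VF := fun x y i => (sC N i * ek k x y * qk N x y k i)%C.

Lemma HasW_Fk N k i : HasW (fun x y => Fk N k x y i)
  (fun x y => Fk N (S k) x y i + (ci N - two * ci k) * xim x y * rinv x y * Fk N k x y i)%C.
Proof.
  unfold Fk. eapply HasW_ext. apply HasW_mul. apply HasW_cmul. apply HasW_ek. apply HasW_qk.
  intros x y. unfold Dq. simpl ek. ring.
Qed.

Lemma wirt_congr (V W : VF) j x y : (forall a b, V a b j = W a b j) -> wirt V x y j = wirt W x y j.
Proof.
  intro H. unfold wirt.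
  assert (E : (fun a b => V a b j) = (fun a b => W a b j)).
  { apply functional_extensionality; intro; apply functional_extensionality; intro; apply H. }
  replace (fun a b => re (V a b j)) with (fun a b => re (W a b j)).
  replace (fun a b => im (V a b j)) with (fun a b => im (W a b j)). reflexivity.
  all: apply functional_extensionality; intro; apply functional_extensionality; intro; rewrite H; auto.
Qed.

Lemma csum_delta n i f : csum n (fun l => if Nat.eqb i l then f l else Cx0) =
  if (i <=? n)%nat then f i else Cx0.
Proof.
  induction n; simpl.
  - destruct (Nat.eqb_spec i 0), (Nat.leb_spec i 0); subst; try lia; reflexivity.
  - rewrite IHn. destruct (Nat.eqb_spec i (S n)), (Nat.leb_spec i n), (Nat.leb_spec i (S n));
    subst; try lia; ring.
Qed.

Lemma csum_idm n i f : (i <= n)%nat -> csum n (fun l => idm i l * f l)%C = f i.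
Proof.
  intro H. transitivity (csum n (fun l => if Nat.eqb i l then f l else Cx0)).
  - apply csum_ext. intros l _. unfold idm. destruct (Nat.eqb i l); ring.
  - rewrite csum_delta. destruct (Nat.leb_spec i n); [reflexivity | lia].
Qed.

Lemma csum_sub n f g : csum n (fun i => f i - g i)%C = (csum n f - csum n g)%C.
Proof. induction n; simpl. reflexivity. rewrite IHn. ring. Qed.
Lemma csum_add n f g : csum n (fun i => f i + g i)%C = (csum n f + csum n g)%C.
Proof. induction n; simpl. reflexivity. rewrite IHn. ring. Qed.

Lemma vn_im n v : im (vnorm2 n v) = 0.
Proof. induction n; unfold vnorm2 in *; simpl; [|rewrite IHn]; ring. Qed.

Lemma vn_ge n v : 0 <= re (vnorm2 n v) /\
  forall l, (l <= n)%nat -> re (v l) * re (v l) + im (v l) * im (v l) <= re (vnorm2 n v).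
Proof.
  induction n; unfold vnorm2 in *; simpl.
  - split. nra. intros l Hl. assert (l = 0%nat) by lia. subst. lra.
  - destruct IHn as [A B]. split. nra. intros l Hl.
    destruct (Nat.eq_dec l (S n)). subst. nra. specialize (B l ltac:(lia)). nra.
Qed.

Lemma vn_zero n v : vnorm2 n v = Cx0 -> forall l, (l <= n)%nat -> v l = Cx0.
Proof.
  intros H l Hl. destruct (vn_ge n v) as [A B]. specialize (B l Hl). rewrite H in B. simpl in B.
  apply Cx_ext; simpl; nra.
Qed.

Lemma Cxinv_l a : a <> Cx0 -> (Cxinv a * a = Cx1)%C.
Proof.
  intro H. assert (re a * re a + im a * im a <> 0).
  { intro E. apply H. apply Cx_ext; simpl; nra. }
  cxu. apply Cx_ext; simpl; field; assumption.
Qed.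

Lemma vnorm2_ext n v w : (forall l, (l <= n)%nat -> v l = w l) -> vnorm2 n v = vnorm2 n w.
Proof. intro H. unfold vnorm2. apply csum_ext. intros. rewrite H by auto. reflexivity. Qed.

Lemma proj_ext n v w i j : (forall l, (l <= n)%nat -> v l = w l) -> (i <= n)%nat -> (j <= n)%nat ->
  proj n v i j = proj n w i j.
Proof. intros H Hi Hj. unfold proj. rewrite (vnorm2_ext n v w H), H, H by auto. reflexivity. Qed.

Lemma sC_sq N l : (l <= N)%nat -> (Cxconj (sC N l) * sC N l = wt N l)%C.
Proof.
  intro H. pose proof (bin_pos N l H) as P. unfold sC, wt. cxu. apply Cx_ext; simpl; [|ring].
  rewrite Rmult_0_r, Rminus_0_r. rewrite <- Rinv_mult. rewrite sqrt_sqrt; lra.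
Qed.

Lemma orthF N k x y : csum N (fun l => Cxconj (Fk N k x y l) * Fk N (S k) x y l)%C = Cx0.
Proof.
  transitivity (Cxconj (ek k x y) * ek (S k) x y * ipw N (qk N x y k) (qk N x y (S k)))%C.
  - unfold ipw. rewrite <- csum_scal. apply csum_ext. intros l Hl. unfold Fk.
    rewrite !conj_mul. rewrite <- (sC_sq N l Hl). ring.
  - rewrite orth. ring.
Qed.

Lemma f0_Fk N x y i : (i <= N)%nat -> f0 N x y i = Fk N 0 x y i.
Proof.
  intro H. unfold f0, Fk, sC. simpl ek. simpl qk. unfold q0, B. pose proof (bin_pos N i H) as P.
  unfold bin in *. destruct (Nat.leb_spec i N); [|lia].
  assert (Q : sqrt (Binomial.C N i) = / sqrt (Binomial.C N i) * Binomial.C N i).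
  { pose proof (sqrt_lt_R0 _ P). rewrite <- (sqrt_sqrt (Binomial.C N i)) at 3 by lra. field. lra. }
  rewrite Q at 1. cxr.
Qed.

Lemma fseq_Fk N k x y i : (i <= N)%nat -> fseq N k x y i = Fk N k x y i.
Proof.
  revert x y i. induction k; intros x y i Hi.
  - simpl. apply f0_Fk, Hi.
  - simpl fseq. unfold mvec, msub.
    set (beta := ((ci N - two * ci k) * xim x y * rinv x y)%C).
    set (n := vnorm2 N (Fk N k x y)).
    rewrite (csum_ext N _ (fun l => idm i l * (Fk N (S k) x y l + beta * Fk N k x y l) -
       (Fk N k x y i * Cxinv n) * (Cxconj (Fk N k x y l) * Fk N (S k) x y l
          + beta * (Cxconj (Fk N k x y l) * Fk N k x y l)))%C).
    + rewrite csum_sub, csum_idm by exact Hi. rewrite csum_scal, csum_add, csum_scal, orthF.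
      fold (vnorm2 N (Fk N k x y)). fold n.
      destruct (classic (n = Cx0)) as [E|E].
      * rewrite (vn_zero N _ E i Hi). ring.
      * transitivity (Fk N (S k) x y i + beta * Fk N k x y i * (Cx1 - Cxinv n * n))%C. ring.
        rewrite Cxinv_l by exact E. ring.
    + intros l Hl. rewrite (wirt_congr (fseq N k) (Fk N k) l x y).
      * rewrite (wirt_HasW (Fk N k) l _ (HasW_Fk N k l) x y).
        rewrite (proj_ext N (fseq N k x y) (Fk N k x y) i l) by auto.
        unfold proj, Cxdiv. fold n. subst beta. ring.
      * intros a b. apply IHk. exact Hl.
Qed.

Lemma sqrt_rel_aux a c b0 b1 : 0 < a -> 0 < c -> 0 < b0 -> 0 < b1 -> a * b0 = c * b1 ->
  sqrt (a * c) * / sqrt b0 = a * / sqrt b1 /\ sqrt (a * c) * / sqrt b1 = c * / sqrt b0.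
Proof.
  intros Ha Hc H0 H1 E.
  assert (B1 : b1 = a * b0 / c) by (rewrite E; field; lra).
  split.
  - rewrite <- (sqrt_square a) at 2 by lra.
    rewrite <- !Rdiv_def, <- !sqrt_div_alt by lra. f_equal. rewrite B1. field. lra.
  - rewrite <- (sqrt_square c) at 2 by lra.
    rewrite <- !Rdiv_def, <- !sqrt_div_alt by lra. f_equal. rewrite B1. field. lra.
Qed.

Lemma sq_L N m : (m < N)%nat ->
  sqrt ((INR N - INR (S m) + 1) * INR (S m)) * / sqrt (bin N m) = (INR N - INR m) * / sqrt (bin N (S m)) /\
  sqrt ((INR N - INR (S m) + 1) * INR (S m)) * / sqrt (bin N (S m)) = INR (S m) * / sqrt (bin N m).
Proof.
  intro H. replace (INR N - INR (S m) + 1) with (INR N - INR m) by (rewrite S_INR; ring).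
  apply sqrt_rel_aux.
  - apply lt_INR in H. lra.
  - apply lt_0_INR; lia.
  - apply bin_pos; lia.
  - apply bin_pos; lia.
  - rewrite bin_rel, S_INR. ring.
Qed.

Definition smt N (v : Vec) i : Cx := match i with O => Cx0
  | S m => (RtoCx (sqrt ((INR N - INR (S m) + 1) * INR (S m))) * v m)%C end.
Definition spt N (v : Vec) i : Cx := if (S i <=? N)%nat then
  (RtoCx (sqrt ((INR N - INR (S i) + 1) * INR (S i))) * v (S i))%C else Cx0.

Lemma sum_sz N v i : (i <= N)%nat ->
  csum N (fun l => sigma_z N i l * v l)%C = (RtoCx (INR N / 2 - INR i) * v i)%C.
Proof.
  intro H. transitivity (csum N (fun l => if Nat.eqb i l then (RtoCx (INR N / 2 - INR l) * v l)%C else Cx0)).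
  - apply csum_ext. intros l _. unfold sigma_z. destruct (Nat.eqb_spec i l); subst; ring.
  - rewrite csum_delta. destruct (Nat.leb_spec i N); [reflexivity|lia].
Qed.

Lemma sum_sm N v i : (i <= N)%nat ->
  csum N (fun l => sigma_minus N i l * v l)%C = smt N v i.
Proof.
  intro H. destruct i as [|m].
  - apply csum_zero. intros l _. unfold sigma_minus. simpl. ring.
  - transitivity (csum N (fun l => if Nat.eqb m l then
        (RtoCx (sqrt ((INR N - INR (S m) + 1) * INR (S m))) * v l)%C else Cx0)).
    + apply csum_ext. intros l _. unfold sigma_minus. simpl Nat.eqb.
      destruct (Nat.eqb_spec m l); subst; ring.
    + rewrite csum_delta. destruct (Nat.leb_spec m N); [reflexivity|lia].
Qed.

Lemma sum_sp N v i :
  csum N (fun l => sigma_plus N i l * v l)%C = spt N v i.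
Proof.
  transitivity (csum N (fun l => if Nat.eqb (S i) l then
        (RtoCx (sqrt ((INR N - INR l + 1) * INR l)) * v l)%C else Cx0)).
  - apply csum_ext. intros l _. unfold sigma_plus. destruct (Nat.eqb (S i) l); ring.
  - rewrite csum_delta. reflexivity.
Qed.

Lemma inv_rho x y : Cxinv (Cxadd Cx1 (Cxmul (xip x y) (xim x y))) = rinv x y.
Proof.
  unfold rinv, rho. pose proof (rho_pos x y). unfold rho in *. cxu. apply Cx_ext; simpl; field; nra.
Qed.

Lemma mvec_Sp N x y v i : (i <= N)%nat ->
  mvec N (S_plus N x y) v i =
  (rinv x y * (xim x y * (ci N - two * ci i) * v i - smt N v i + xim x y * xim x y * spt N v i))%C.
Proof.
  intro H. unfold mvec, S_plus, mscal, madd, msub.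
  set (iv := Cxinv (Cxadd Cx1 (Cxmul (xip x y) (xim x y)))).
  transitivity (csum N (fun l => (iv * (RtoCx 2 * xim x y)) * (sigma_z N i l * v l)
     + (- iv) * (sigma_minus N i l * v l) + (iv * (xim x y * xim x y)) * (sigma_plus N i l * v l))%C).
  - apply csum_ext. intros l _. simpl Cxpow. ring.
  - rewrite csum_lin3, sum_sz, sum_sm, sum_sp by exact H. subst iv. rewrite inv_rho.
    unfold ci, two. cxu. apply Cx_ext; simpl; field. all: apply Rgt_not_eq, rho_pos.
Qed.

Lemma mvec_Sm N x y v i : (i <= N)%nat ->
  mvec N (S_minus N x y) v i =
  (rinv x y * (xip x y * (ci N - two * ci i) * v i + xip x y * xip x y * smt N v i - spt N v i))%C.
Proof.
  intro H. unfold mvec, S_minus, mscal, madd, msub.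
  set (iv := Cxinv (Cxadd Cx1 (Cxmul (xip x y) (xim x y)))).
  transitivity (csum N (fun l => (iv * (RtoCx 2 * xip x y)) * (sigma_z N i l * v l)
     + (iv * (xip x y * xip x y)) * (sigma_minus N i l * v l) + (- iv) * (sigma_plus N i l * v l))%C).
  - apply csum_ext. intros l _. simpl Cxpow. ring.
  - rewrite csum_lin3, sum_sz, sum_sm, sum_sp by exact H. subst iv. rewrite inv_rho.
    unfold ci, two. cxu. apply Cx_ext; simpl; field. all: apply Rgt_not_eq, rho_pos.
Qed.

Lemma smt_basis N (q : Vec) e i : (i <= N)%nat ->
  smt N (fun l => sC N l * e * q l)%C i = (sC N i * e * Dm N q i)%C.
Proof.
  intro H. unfold smt, Dm. destruct i as [|m]; simpl dn. ring.
  destruct (sq_L N m ltac:(lia)) as [L1 _].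
  transitivity (RtoCx (sqrt ((INR N - INR (S m) + 1) * INR (S m)) * / sqrt (bin N m)) * e * q m)%C.
  unfold sC. cxr. rewrite L1. unfold sC, ci. rewrite S_INR. cxr.
Qed.

Lemma spt_basis N (q : Vec) e i : (i <= N)%nat -> q (S N) = Cx0 ->
  spt N (fun l => sC N l * e * q l)%C i = (sC N i * e * Dp q i)%C.
Proof.
  intros H Hq. unfold spt, Dp. destruct (Nat.leb_spec (S i) N).
  - destruct (sq_L N i ltac:(lia)) as [_ L2].
    transitivity (RtoCx (sqrt ((INR N - INR (S i) + 1) * INR (S i)) * / sqrt (bin N (S i))) * e * q (S i))%C.
    unfold sC. cxr. rewrite L2. unfold sC, ci. rewrite S_INR. cxr.
  - assert (i = N) by lia. subst. rewrite Hq. ring.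
Qed.

Lemma SpF N k x y i : (i <= N)%nat ->
  mvec N (S_plus N x y) (Fk N k x y) i = (- rhoC x y * Fk N (S k) x y i)%C.
Proof.
  intro H. rewrite mvec_Sp by exact H. unfold Fk.
  rewrite smt_basis, spt_basis by (try exact H; apply qk_supp; lia).
  cbv beta. simpl ek. simpl qk. unfold Xp, Dz.
  transitivity (- (rhoC x y * rinv x y) * (rinv x y * (sC N i * ek k x y * (Dm N (qk N x y k) i -
     xim x y * ((ci N - two * ci i) * qk N x y k i) - xim x y * xim x y * Dp (qk N x y k) i))))%C.
  - replace (rhoC x y * rinv x y)%C with Cx1 by (rewrite <- (rinv_rho x y); ring). ring.
  - ring.
Qed.

Lemma SmF N k x y i : (i <= N)%nat ->
  mvec N (S_minus N x y) (Fk N (S k) x y) i = (cY N k * rinv x y * Fk N k x y i)%C.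
Proof.
  intro H. rewrite mvec_Sm by exact H. unfold Fk.
  rewrite smt_basis, spt_basis by (try exact H; apply qk_supp; lia).
  cbv beta. transitivity (rinv x y * sC N i * ek (S k) x y * Yp N x y (qk N x y (S k)) i)%C.
  - unfold Yp, Dz. ring.
  - rewrite Yqk. simpl ek.
    transitivity (cY N k * rinv x y * (sC N i * ek k x y * qk N x y k i) *
       (rinv x y * rhoC x y) * (rinv x y * rhoC x y))%C. ring.
    rewrite rinv_rho. ring.
Qed.

Lemma Sadj N x y l m : S_minus N x y l m = Cxconj (S_plus N x y m l).
Proof.
  unfold S_minus, S_plus, mscal, madd, msub. rewrite !inv_rho.
  unfold sigma_z, sigma_plus, sigma_minus.
  rewrite (Nat.eqb_sym l m), (Nat.eqb_sym l (S m)), (Nat.eqb_sym (S l) m).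
  unfold rinv. simpl Cxpow.
  destruct (Nat.eqb_spec m l), (Nat.eqb_spec (S m) l), (Nat.eqb_spec m (S l)); try lia; subst; cxu; apply Cx_ext; simpl; field; apply Rgt_not_eq, rho_pos.
Qed.

Lemma conj_conj a : Cxconj (Cxconj a) = a.
Proof. cxr. Qed.

Lemma Sadj2 N x y l m : S_plus N x y l m = Cxconj (S_minus N x y m l).
Proof. rewrite Sadj, conj_conj. reflexivity. Qed.

Lemma csum_conj n f : Cxconj (csum n f) = csum n (fun i => Cxconj (f i)).
Proof. induction n; simpl. reflexivity. rewrite conj_add, IHn. reflexivity. Qed.

Lemma sandwich N A Bm P v i j :
  (forall l m, (l <= N)%nat -> (m <= N)%nat -> P l m = proj N v l m) ->
  (forall l m, Bm l m = Cxconj (A m l)) ->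
  (i <= N)%nat ->
  mmul N (mmul N A P) Bm i j =
  (mvec N A v i * Cxconj (mvec N A v j) * Cxinv (vnorm2 N v))%C.
Proof.
  intros HP HB Hi. unfold mmul.
  rewrite (csum_ext N _ (fun m => (mvec N A v i * Cxinv (vnorm2 N v)) * (Cxconj (v m) * Bm m j))%C).
  - rewrite csum_scal. unfold mvec. rewrite csum_conj.
    rewrite (csum_ext N (fun m => Cxconj (v m) * Bm m j)%C (fun m => Cxconj (A j m * v m))%C).
    + ring.
    + intros m _. rewrite HB, conj_mul. ring.
  - intros m Hm. rewrite (csum_ext N _ (fun l => (Cxconj (v m) * Cxinv (vnorm2 N v)) * (A i l * v l))%C).
    + rewrite csum_scal. unfold mvec. ring.
    + intros l Hl. rewrite HP by auto. unfold proj, Cxdiv. ring.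
Qed.

Lemma mul_nz a b : a <> Cx0 -> b <> Cx0 -> (a * b)%C <> Cx0.
Proof.
  intros Ha Hb E. apply Hb. transitivity ((Cxinv a * a) * b)%C.
  - rewrite Cxinv_l by exact Ha. ring.
  - transitivity (Cxinv a * (a * b))%C. ring. rewrite E. ring.
Qed.

Lemma conj_nz a : a <> Cx0 -> Cxconj a <> Cx0.
Proof. intros H E. apply H. rewrite <- (conj_conj a), E. cxr. Qed.

Lemma inv_nz a : a <> Cx0 -> Cxinv a <> Cx0.
Proof. intros H E. pose proof (Cxinv_l a H) as F. rewrite E in F. apply (f_equal re) in F. simpl in F. lra. Qed.

Lemma final_eq N A Bm P v w c i j :
  (forall l m, (l <= N)%nat -> (m <= N)%nat -> P l m = proj N v l m) ->
  (forall l m, Bm l m = Cxconj (A m l)) ->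
  (forall l, (l <= N)%nat -> mvec N A v l = (c * w l)%C) ->
  c <> Cx0 -> vnorm2 N v <> Cx0 -> vnorm2 N w <> Cx0 ->
  (i <= N)%nat -> (j <= N)%nat ->
  mtr N (mmul N (mmul N A P) Bm) <> Cx0 /\ proj N w i j = Cxdiv (mmul N (mmul N A P) Bm i j) (mtr N (mmul N (mmul N A P) Bm)).
Proof.
  intros HP HB Hu Hc Hv Hw Hi Hj.
  assert (T : mtr N (mmul N (mmul N A P) Bm) =
     (Cxconj c * c * vnorm2 N w * Cxinv (vnorm2 N v))%C).
  { unfold mtr. rewrite (csum_ext N _ (fun l => (Cxconj c * c * Cxinv (vnorm2 N v)) * (Cxconj (w l) * w l))%C).
    - rewrite csum_scal. unfold vnorm2. ring.
    - intros l Hl. rewrite (sandwich N A Bm P v l l HP HB Hl), Hu by exact Hl. rewrite conj_mul. ring. }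
  assert (Hiv : Cxinv (vnorm2 N v) <> Cx0) by (apply inv_nz; exact Hv).
  split.
  - rewrite T. repeat apply mul_nz; auto. apply conj_nz; auto.
  - rewrite T. rewrite (sandwich N A Bm P v i j HP HB Hi). rewrite !Hu by assumption. unfold proj, Cxdiv.
    set (d := (Cxconj c * c * vnorm2 N w * Cxinv (vnorm2 N v))%C).
    assert (Hd : d <> Cx0) by (subst d; repeat apply mul_nz; auto; apply conj_nz; auto).
    transitivity (w i * Cxconj (w j) * Cxinv (vnorm2 N w) * (Cxinv d * d))%C.
    + rewrite Cxinv_l by exact Hd. ring.
    + subst d. rewrite conj_mul.
      transitivity (w i * Cxconj (w j) * Cxinv (Cxconj c * c * vnorm2 N w * Cxinv (vnorm2 N v))
        * Cxconj c * c * (Cxinv (vnorm2 N w) * vnorm2 N w) * Cxinv (vnorm2 N v))%C. ring.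
      rewrite Cxinv_l by exact Hw. ring.
Qed.

Lemma rhoC_nz x y : rhoC x y <> Cx0.
Proof. intro E. apply (f_equal re) in E. unfold rhoC in E. simpl in E. nra. Qed.
Lemma rinv_nz x y : rinv x y <> Cx0.
Proof. intro E. pose proof (rinv_rho x y) as F. rewrite E in F. apply (f_equal re) in F. simpl in F. lra. Qed.
Lemma cY_nz N k : (k < N)%nat -> cY N k <> Cx0.
Proof.
  intros H E. apply (f_equal re) in E. unfold cY, ci in E. simpl in E.
  apply lt_INR in H. pose proof (pos_INR k). nra.
Qed.
Lemma ek_nz k x y : ek k x y <> Cx0.
Proof.
  induction k; simpl. intro E; apply (f_equal re) in E; simpl in E; lra.
  repeat apply mul_nz; auto; apply rinv_nz.
Qed.
Lemma sC_nz N l : (l <= N)%nat -> sC N l <> Cx0.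
Proof.
  intros H E. apply (f_equal re) in E. unfold sC in E. simpl in E.
  pose proof (bin_pos N l H). pose proof (sqrt_lt_R0 _ H0).
  pose proof (Rinv_0_lt_compat _ H1). lra.
Qed.

Lemma qk_nz N x y k : (k <= N)%nat -> exists l, (l <= N)%nat /\ qk N x y k l <> Cx0.
Proof.
  induction k; intro Hk.
  - exists 0%nat. split. lia. simpl. unfold q0, B. simpl. intro E. apply (f_equal re) in E.
    simpl in E. pose proof (bin_pos N 0 ltac:(lia)). nra.
  - destruct (IHk ltac:(lia)) as [l0 [Hl0 Hq]].
    apply NNPP. intro Hn.
    assert (Z : forall l, qk N x y (S k) l = Cx0).
    { intro l. destruct (Nat.le_gt_cases l N) as [Hl|Hl].
      - apply NNPP. intro E. apply Hn. exists l. auto.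
      - apply qk_supp; exact Hl. }
    pose proof (Yqk N x y k l0) as Y.
    rewrite (Yp_ext N x y _ (fun _ => Cx0) Z) in Y.
    assert (Y0 : Yp N x y (fun _ => Cx0) l0 = Cx0) by (unfold Yp, Dm, Dz, Dp; destruct l0; simpl; ring).
    rewrite Y0 in Y. symmetry in Y. revert Y.
    apply mul_nz; [|exact Hq]. apply mul_nz; [|apply rhoC_nz]. apply mul_nz; [apply cY_nz; lia|apply rhoC_nz].
Qed.

Lemma vnF_nz N x y k : (k <= N)%nat -> vnorm2 N (Fk N k x y) <> Cx0.
Proof.
  intros Hk E. destruct (qk_nz N x y k Hk) as [l [Hl Hq]].
  pose proof (vn_zero N _ E l Hl) as F. unfold Fk in F. revert F.
  repeat apply mul_nz; auto. apply sC_nz; auto. apply ek_nz.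
Qed.

Theorem mainTheorem9 (N : nat) (HN : (1 <= N)%nat) (x y : R) :
  (forall k : nat, (k <= N - 1)%nat ->
     mtr N (mmul N (mmul N (S_plus N x y) (Pk N k x y)) (S_minus N x y)) <> Cx0 /\
     forall i j : nat, (i <= N)%nat -> (j <= N)%nat ->
       Pk N (S k) x y i j =
       Cxdiv (mmul N (mmul N (S_plus N x y) (Pk N k x y)) (S_minus N x y) i j)
             (mtr N (mmul N (mmul N (S_plus N x y) (Pk N k x y)) (S_minus N x y)))) /\
  (forall k : nat, (1 <= k)%nat -> (k <= N)%nat ->
     mtr N (mmul N (mmul N (S_minus N x y) (Pk N k x y)) (S_plus N x y)) <> Cx0 /\
     forall i j : nat, (i <= N)%nat -> (j <= N)%nat ->
       Pk N (k - 1) x y i j =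
       Cxdiv (mmul N (mmul N (S_minus N x y) (Pk N k x y)) (S_plus N x y) i j)
             (mtr N (mmul N (mmul N (S_minus N x y) (Pk N k x y)) (S_plus N x y)))).
Proof.
  split.
  - intros k Hk.
    assert (HP : forall l m, (l <= N)%nat -> (m <= N)%nat ->
       Pk N k x y l m = proj N (Fk N k x y) l m).
    { intros l m Hl Hm. unfold Pk. apply proj_ext; auto. intros; apply fseq_Fk; auto. }
    pose proof (fun i j => final_eq N (S_plus N x y) (S_minus N x y) (Pk N k x y)
       (Fk N k x y) (Fk N (S k) x y) (- rhoC x y)%C i j HP (Sadj N x y)
       (fun l Hl => SpF N k x y l Hl)) as FE.
    assert (Hc : (- rhoC x y)%C <> Cx0).
    { intro E. apply (rhoC_nz x y). transitivity (- (- rhoC x y))%C. ring. rewrite E. ring. }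
    assert (H1 : vnorm2 N (Fk N k x y) <> Cx0) by (apply vnF_nz; lia).
    assert (H2 : vnorm2 N (Fk N (S k) x y) <> Cx0) by (apply vnF_nz; lia).
    split.
    + apply (FE 0%nat 0%nat Hc H1 H2); lia.
    + intros i j Hi Hj. unfold Pk at 1. rewrite (proj_ext N _ (Fk N (S k) x y)) by (auto; intros; apply fseq_Fk; auto).
      apply (FE i j Hc H1 H2 Hi Hj).
  - intros k Hk1 Hk. destruct k as [|k']; [lia|]. replace (S k' - 1)%nat with k' by lia.
    assert (HP : forall l m, (l <= N)%nat -> (m <= N)%nat ->
       Pk N (S k') x y l m = proj N (Fk N (S k') x y) l m).
    { intros l m Hl Hm. unfold Pk. apply proj_ext; auto. intros; apply fseq_Fk; auto. }
    pose proof (fun i j => final_eq N (S_minus N x y) (S_plus N x y) (Pk N (S k') x y)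
       (Fk N (S k') x y) (Fk N k' x y) (cY N k' * rinv x y)%C i j HP (Sadj2 N x y)
       (fun l Hl => SmF N k' x y l Hl)) as FE.
    assert (Hc : (cY N k' * rinv x y)%C <> Cx0) by (apply mul_nz; [apply cY_nz; lia | apply rinv_nz]).
    assert (H1 : vnorm2 N (Fk N (S k') x y) <> Cx0) by (apply vnF_nz; lia).
    assert (H2 : vnorm2 N (Fk N k' x y) <> Cx0) by (apply vnF_nz; lia).
    split.
    + apply (FE 0%nat 0%nat Hc H1 H2); lia.
    + intros i j Hi Hj. unfold Pk at 1. rewrite (proj_ext N _ (Fk N k' x y)) by (auto; intros; apply fseq_Fk; auto).
      apply (FE i j Hc H1 H2 Hi Hj).
Qed.
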